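(* The following set $\mathcal B_0$ of elements is a basis of the complex vector space $\hat{G}_{\Lambda,\Lambda_F}$: (1) all $\bar\Xi^{\lambda_1}_{\lambda_2}\otimes f^{\dot I}_{\dot J}\otimes\Xi^{\lambda_3}_{\lambda_4}$ with $\lambda_1+\lambda_2>2$ and $\lambda_3+\lambda_4>2$; (2) all $\bar\Xi^{\lambda_1}_{\lambda_2}\otimes l^{\dot I}_{\dot J}$ with $\lambda_1\ne1$ or $\lambda_2\ne1$; (3) all $r^{\dot I}_{\dot J}\otimes\Xi^{\lambda_1}_{\lambda_2}$ with $\lambda_1\ne1$ or $\lambda_2\ne1$; (4) all $\sigma^{\dot I}_{\dot J}$; where $\dot I,\dot J$ range over all sequences and the $\lambda_i$ over $\{1,\dots,\Lambda_F\}$.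
   Context: Fix positive integers $\Lambda,\Lambda_F$. A sequence $\dot I=i_1\cdots i_a$ is a finite, possibly empty, sequence of integers in $\{1,\dots,\Lambda\}$; juxtaposition denotes concatenation and $\delta^{\dot I}_{\dot J}$ is $1$ if $\dot I=\dot J$ and $0$ otherwise (similarly for integers). Let $\mathcal{T}_o$ be the complex vector space with basis the symbols $\bar\phi^{\lambda_1}\otimes s^{\dot K}\otimes\phi^{\lambda_2}$, $1\le\lambda_1,\lambda_2\le\Lambda_F$, $\dot K$ any sequence. For all sequences $\dot I,\dot J$ and all $\lambda_i\in\{1,\dots,\Lambda_F\}$ define linear operators on $\mathcal{T}_o$ (each written as a single symbol): first kind: $\bar\Xi^{\lambda_1}_{\lambda_2}\otimes f^{\dot I}_{\dot J}\otimes\Xi^{\lambda_3}_{\lambda_4}(\bar\phi^{\lambda_5}\otimes s^{\dot K}\otimes\phi^{\lambda_6})=\delta^{\lambda_5}_{\lambda_2}\delta^{\dot K}_{\dot J}\delta^{\lambda_6}_{\lambda_4}\,\bar\phi^{\lambda_1}\otimes s^{\dot I}\otimes\phi^{\lambda_3}$; second kind: $\bar\Xi^{\lambda_1}_{\lambda_2}\otimes l^{\dot I}_{\dot J}(\bar\phi^{\lambda_3}\otimes s^{\dot K}\otimes\phi^{\lambda_4})=\delta^{\lambda_3}_{\lambda_2}\sum_{\dot K_1\dot K_2=\dot K}\delta^{\dot K_1}_{\dot J}\,\bar\phi^{\lambda_1}\otimes s^{\dot I\dot K_2}\otimes\phi^{\lambda_4}$; third kind: $r^{\dot I}_{\dot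 J}\otimes\Xi^{\lambda_1}_{\lambda_2}(\bar\phi^{\lambda_3}\otimes s^{\dot K}\otimes\phi^{\lambda_4})=\delta^{\lambda_4}_{\lambda_2}\sum_{\dot K_1\dot K_2=\dot K}\delta^{\dot K_2}_{\dot J}\,\bar\phi^{\lambda_3}\otimes s^{\dot K_1\dot I}\otimes\phi^{\lambda_1}$; fourth kind: $\sigma^{\dot I}_{\dot J}(\bar\phi^{\lambda_1}\otimes s^{\dot K}\otimes\phi^{\lambda_2})=\sum_{\dot K_1\dot K_2\dot K_3=\dot K}\delta^{\dot K_2}_{\dot J}\,\bar\phi^{\lambda_1}\otimes s^{\dot K_1\dot I\dot K_3}\otimes\phi^{\lambda_2}$; sums run over all ways to write $\dot K$ as a concatenation of possibly empty sequences. The open string algebra $\hat{G}_{\Lambda,\Lambda_F}$ is the complex Lie algebra (commutator bracket) of operators on $\mathcal{T}_o$ spanned by all operators of these four kinds; elements are regarded as these operators. *)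

(* Defs.v *)
From mathcomp Require Import all_boot all_algebra.
From mathcomp Require Import complex.
From mathcomp Require Import Rstruct.
Set Implicit Arguments.
Unset Strict Implicit.
Unset Printing Implicit Defensive.
Import GRing.Theory.
Local Open Scope ring_scope.

Definition C : fieldType := (Rdefinitions.R)[i].

(* Conventions: an index  v : 'I_n  stands for the integer  v+1  in {1,...,n}.
   n plays the role of Lambda, m the role of Lambda_F.
   A sequence \dot I is an element of  seq 'I_n.
   The basis symbol  \bar\phi^{a} (x) s^{K} (x) \phi^{c}  of T_o is the triple (a, K, c). *)
Definition basisT (n m : nat) := ('I_m * seq 'I_n * 'I_m)%type.

(* A linear operator A on T_o is determined by its matrix coefficients:
   op_coef A b b' = coefficient of the basis vector b' in A(b). *)
Definition opT (n m : nat) := basisT n m -> basisT n m -> C.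

Definition b2C (b : bool) : C := (nat_of_bool b)%:R.

Definition opF n m (l1 l2 : 'I_m) (I J : seq 'I_n) (l3 l4 : 'I_m) : opT n m :=
  fun b b' =>
    let: (a, K, c) := b in let: (a', K', c') := b' in
    b2C [&& a == l2, K == J, c == l4, a' == l1, K' == I & c' == l3].

(* second kind:  \bar\Xi^{l1}_{l2} (x) l^{I}_{J}.  The decompositions K = K1 K2
   are indexed by i <= size K with K1 = take i K, K2 = drop i K. *)
Definition opL n m (l1 l2 : 'I_m) (I J : seq 'I_n) : opT n m :=
  fun b b' =>
    let: (a, K, c) := b in let: (a', K', c') := b' in
    b2C [&& a == l2, a' == l1 & c' == c] *
    (\sum_(i < (size K).+1)
        nat_of_bool ((take i K == J) && (K' == I ++ drop i K)))%N%:R.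

Definition opR n m (I J : seq 'I_n) (l1 l2 : 'I_m) : opT n m :=
  fun b b' =>
    let: (a, K, c) := b in let: (a', K', c') := b' in
    b2C [&& c == l2, c' == l1 & a' == a] *
    (\sum_(i < (size K).+1)
        nat_of_bool ((drop i K == J) && (K' == take i K ++ I)))%N%:R.

(* fourth kind:  \sigma^{I}_{J}.  Decompositions K = K1 K2 K3 are indexed by
   i <= j <= size K with K1 = take i K, K2 = drop i (take j K), K3 = drop j K. *)
Definition opS n m (I J : seq 'I_n) : opT n m :=
  fun b b' =>
    let: (a, K, c) := b in let: (a', K', c') := b' in
    b2C ((a' == a) && (c' == c)) *
    (\sum_(j < (size K).+1) \sum_(i < j.+1)
        nat_of_bool ((drop i (take j K) == J) &&
                     (K' == take i K ++ I ++ drop j K)))%N%:R.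

Inductive gen (n m : nat) : Type :=
| GF of 'I_m & 'I_m & seq 'I_n & seq 'I_n & 'I_m & 'I_m
| GL of 'I_m & 'I_m & seq 'I_n & seq 'I_n
| GR of seq 'I_n & seq 'I_n & 'I_m & 'I_m
| GS of seq 'I_n & seq 'I_n.

Definition op_of n m (g : gen n m) : opT n m :=
  match g with
  | GF l1 l2 I' J' l3 l4 => opF l1 l2 I' J' l3 l4
  | GL l1 l2 I' J' => opL l1 l2 I' J'
  | GR I' J' l1 l2 => opR I' J' l1 l2
  | GS I' J' => @opS n m I' J'
  end.

(* The set B_0 (recall the integer value of l : 'I_m is l.+1). *)
Definition inB0 n m (g : gen n m) : bool :=
  match g with
  | GF l1 l2 _ _ l3 l4 => (2 < l1.+1 + l2.+1)%N && (2 < l3.+1 + l4.+1)%N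
  | GL l1 l2 _ _ => (l1.+1 != 1%N) || (l2.+1 != 1%N)
  | GR _ _ l1 l2 => (l1.+1 != 1%N) || (l2.+1 != 1%N)
  | GS _ _ => true
  end.

Definition lincomb n m k (c : 'I_k -> C) (f : 'I_k -> gen n m) : opT n m :=
  fun b b' => \sum_(i < k) c i * op_of (f i) b b'.

(* Main.v *)
Require Import Defs.
From mathcomp Require Import all_boot all_algebra.
From mathcomp Require Import complex.
From mathcomp Require Import Rstruct.
From mathcomp Require Import zify ring.
Import GRing.Theory Num.Theory.

Definition NL {n} (I J K K' : seq 'I_n) : nat :=
  \sum_(i < (size K).+1) nat_of_bool ((take i K == J) && (K' == I ++ drop i K)).
Definition NR {n} (I J K K' : seq 'I_n) : nat :=
  \sum_(i < (size K).+1) nat_of_bool ((drop i K == J) && (K' == take i K ++ I)).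
Definition NS {n} (I J K K' : seq 'I_n) : nat :=
  \sum_(j < (size K).+1) \sum_(i < j.+1)
        nat_of_bool ((drop i (take j K) == J) && (K' == take i K ++ I ++ drop j K)).

Lemma eq_cons_case {T : eqType} (K' Y : seq T) k :
  (K' == k :: Y) = if K' is k' :: K'' then (k' == k) && (K'' == Y) else false.
Proof. by case: K'. Qed.

Lemma sum_pick {n} (k : 'I_n) (F : 'I_n -> nat) :
  (\sum_(x < n) nat_of_bool (k == x) * F x = F k)%N.
Proof.
rewrite (bigD1 k) //= eqxx mul1n big1 ?addn0 // => x /negbTE.
by rewrite eq_sym => ->.
Qed.

Lemma NS_cons {n} (I J : seq 'I_n) k K0 K' :
  NS I J (k :: K0) K' = (NL I J (k :: K0) K' +
   if K' is k' :: K'' then nat_of_bool (k' == k) * NS I J K0 K'' else 0)%N.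
Proof.
rewrite /NS /NL big_ord_recl /= big_ord_recl big_ord0 /= addn0.
under eq_bigr => j _ do rewrite big_ord_recl /=.
rewrite big_split /= addnA; congr (_ + _)%N.
  by rewrite [in RHS]big_ord_recl.
case: K' => [|k' K''].
  rewrite big1 // => j _; rewrite big1 // => i _. by rewrite andbF.
rewrite big_distrr /=; apply: eq_bigr => j _.
rewrite big_distrr /=; apply: eq_bigr => i _.
rewrite !add0n eqseq_cons; by case: (k' == k); rewrite /= ?mul1n ?mul0n ?andbF.
Qed.

Lemma NL_cons_sum {n} (I J : seq 'I_n) k K0 K' :
  (\sum_(x < n) NL (x :: I) (x :: J) (k :: K0) K' =
   if K' is k' :: K'' then nat_of_bool (k' == k) * NL I J K0 K'' else 0)%N.
Proof.
rewrite /NL.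
under eq_bigr => x _ do rewrite big_ord_recl /= add0n.
rewrite exchange_big /=.
case: K' => [|k' K''].
  by rewrite big1 // => i _; rewrite big1 // => x _; rewrite andbF.
rewrite big_distrr /=; apply: eq_bigr => i _.
rewrite (bigD1 k) //= big1 ?addn0.
  rewrite !eqseq_cons eqxx /=.
  by case: (k' == k); rewrite /= ?mul1n ?mul0n ?andbF.
move=> x /negbTE hx; by rewrite !eqseq_cons eq_sym hx.
Qed.

Lemma NS_A {n} (I J K K' : seq 'I_n) :
  NS I J K K' = (NL I J K K' + \sum_(x < n) NS (x :: I) (x :: J) K K')%N.
Proof.
elim: K I J K' => [|k K0 IH] I J K'.
  rewrite /NS /NL /= !big_ord_recl !big_ord0 /=.
  by rewrite big1.
rewrite NS_cons.
under eq_bigr => x _ do rewrite NS_cons.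
rewrite big_split /= NL_cons_sum; congr (_ + _)%N.
case: K' => [|k' K'']; first by rewrite big1.
by rewrite IH mulnDr; congr (_ + _)%N; rewrite big_distrr.
Qed.

Lemma NL_nil {n} (I K K' : seq 'I_n) : NL I [::] K K' = nat_of_bool (K' == I ++ K).
Proof.
rewrite /NL big_ord_recl /= take0 drop0 big1 ?addn0 // => i _.
by case: K i => [|k K0] [i hi].
Qed.

Lemma NL_cons_cons {n} (I J0 : seq 'I_n) j k K0 K' :
  NL I (j :: J0) (k :: K0) K' = (nat_of_bool (k == j) * NL I J0 K0 K')%N.
Proof.
rewrite /NL big_ord_recl /= add0n big_distrr /=; apply: eq_bigr => i _.
rewrite eqseq_cons /= add0n.
by case: (k == j); rewrite /= ?mul1n ?mul0n.
Qed.

Lemma NL_C {n} (I J K K' : seq 'I_n) :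
  NL I J K K' = (nat_of_bool ((K == J) && (K' == I)) +
                 \sum_(x < n) NL (rcons I x) (rcons J x) K K')%N.
Proof.
elim: K I J K' => [|k K0 IH] I J K'.
  rewrite {1}/NL big_ord_recl big_ord0 /= addn0 cats0 big1 ?addn0 // => x _.
  by rewrite /NL big_ord_recl big_ord0 /=; case: J.
case: J => [|j J0].
  rewrite NL_nil /= add0n.
  under eq_bigr => x _ do rewrite /= NL_cons_cons NL_nil.
  rewrite (bigD1 k) //= eqxx mul1n big1 ?addn0 ?cat_rcons //.
  by move=> x /negbTE hx; rewrite eq_sym hx.
rewrite NL_cons_cons.
under eq_bigr => x _ do rewrite rcons_cons NL_cons_cons.
rewrite IH eqseq_cons -big_distrr /= -andbA.
by case: (k == j); rewrite /= ?mul1n ?mul0n.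
Qed.

Lemma NR_rev {n} (I J K K' : seq 'I_n) :
  NR I J K K' = NL (rev I) (rev J) (rev K) (rev K').
Proof.
rewrite /NR /NL size_rev (reindex_inj rev_ord_inj) /=; apply: eq_bigr => i _.
by rewrite subSS take_rev drop_rev -rev_cat !(inj_eq (can_inj (@revK _))).
Qed.

Lemma NR_D {n} (I J K K' : seq 'I_n) :
  NR I J K K' = (nat_of_bool ((K == J) && (K' == I)) +
                 \sum_(x < n) NR (x :: I) (x :: J) K K')%N.
Proof.
rewrite NR_rev NL_C !(inj_eq (can_inj (@revK _))); congr (_ + _)%N.
by apply: eq_bigr => x _; rewrite NR_rev !rev_cons.
Qed.

Lemma take_rcons' {T} (s : seq T) x i : (i <= size s)%N -> take i (rcons s x) = take i s.
Proof. by move=> h; rewrite -cats1 takel_cat. Qed.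

Lemma NS_rcons {n} (I J : seq 'I_n) k K0 K' :
  NS I J (rcons K0 k) K' = (NR I J (rcons K0 k) K' +
   \sum_(j < (size K0).+1) \sum_(i < j.+1)
        nat_of_bool ((drop i (take j K0) == J) &&
                     (K' == rcons (take i K0 ++ I ++ drop j K0) k)))%N.
Proof.
rewrite /NS /NR size_rcons big_ord_recr /= addnC; congr (_ + _)%N.
  apply: eq_bigr => i _.
  by rewrite [take (size K0).+1 _]take_oversize ?size_rcons //
     [drop (size K0).+1 _]drop_oversize ?size_rcons // cats0.
apply: eq_bigr => j _; apply: eq_bigr => i _ /=.
have hj : (j <= size K0)%N by rewrite -ltnS.
have hi : (i <= size K0)%N by apply: leq_trans hj; rewrite -ltnS.
by rewrite !take_rcons' // drop_rcons // -!rcons_cat.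
Qed.

Lemma NR_rcons_sum {n} (I J : seq 'I_n) k K0 K'' k' :
  (\sum_(x < n) NR (rcons I x) (rcons J x) (rcons K0 k) (rcons K'' k') =
   nat_of_bool (k' == k) * NR I J K0 K'')%N.
Proof.
under eq_bigr => x _ do rewrite NR_rev !rev_rcons.
by rewrite NL_cons_sum NR_rev.
Qed.

Lemma NR_rcons_sum0 {n} (I J : seq 'I_n) k K0 :
  (\sum_(x < n) NR (rcons I x) (rcons J x) (rcons K0 k) [::] = 0)%N.
Proof.
under eq_bigr => x _ do rewrite NR_rev !rev_rcons.
by rewrite NL_cons_sum.
Qed.

Lemma nil_rcons {T : eqType} (s : seq T) x : ([::] == rcons s x) = false.
Proof. by case: s. Qed.

Lemma NS_B {n} (I J K K' : seq 'I_n) :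
  NS I J K K' = (NR I J K K' + \sum_(x < n) NS (rcons I x) (rcons J x) K K')%N.
Proof.
elim/last_ind: K I J K' => [|K0 k IH] I J K'.
  rewrite /NS /NR /= !big_ord_recl !big_ord0 /=.
  rewrite cats0 big1 // => x _; rewrite !big_ord_recl !big_ord0 /=; by case: J.
under eq_bigr => x _ do rewrite NS_rcons.
rewrite NS_rcons.
rewrite big_split /=; congr (_ + _)%N.
case/lastP: K' => [|K'' k'].
  rewrite NR_rcons_sum0 add0n big1; last first.
    by move=> j _; rewrite big1 // => i _; rewrite nil_rcons andbF.
  by rewrite big1 // => x _; rewrite big1 // => j _; rewrite big1 // => i _; rewrite nil_rcons andbF.
rewrite NR_rcons_sum.
have [->|hne] := eqVneq k' k.
  have E : forall I J : seq 'I_n,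
    (\sum_(j < (size K0).+1) \sum_(i < j.+1)
        nat_of_bool ((drop i (take j K0) == J) &&
                     (rcons K'' k == rcons (take i K0 ++ I ++ drop j K0) k)))%N
    = NS I J K0 K''.
    move=> I1 J1; apply: eq_bigr => j _; apply: eq_bigr => i _.
    by rewrite eqseq_rcons eqxx andbT.
  rewrite E; under eq_bigr => x _ do rewrite E.
  by rewrite mul1n -IH.
have E : forall I J : seq 'I_n,
    (\sum_(j < (size K0).+1) \sum_(i < j.+1)
        nat_of_bool ((drop i (take j K0) == J) &&
                     (rcons K'' k' == rcons (take i K0 ++ I ++ drop j K0) k)))%N
    = 0%N.
  move=> I1 J1; apply: big1 => j _; apply: big1 => i _.
  by rewrite eqseq_rcons (negbTE hne) !andbF.
rewrite E; under eq_bigr => x _ do rewrite E.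
by rewrite mul0n big1.
Qed.

Local Open Scope ring_scope.

Lemma b2C_true : b2C true = 1. Proof. by rewrite /b2C /= mulr1n. Qed.
Lemma b2C_false : b2C false = 0. Proof. by rewrite /b2C /= mulr0n. Qed.

Lemma b2Cnat_neq0 {b k} : b2C b * (k%:R : C) != 0 -> b /\ k != 0%N.
Proof.
case: b; rewrite ?b2C_true ?b2C_false ?mul0r ?eqxx // mul1r => h; split=> //.
by apply: contraNneq h => ->.
Qed.

Lemma b2C_neq0 {b} : b2C b != 0 -> b.
Proof. by case: b; rewrite ?b2C_false ?eqxx. Qed.

Lemma NS_pos {n} (I J K K' : seq 'I_n) : NS I J K K' != 0%N ->
  exists i j, [/\ (i <= j)%N, (j <= size K)%N, drop i (take j K) = J &
                  K' = take i K ++ I ++ drop j K].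
Proof.
rewrite /NS sum_nat_eq0 => /forallPn [j /=].
rewrite sum_nat_eq0 => /forallPn [i /=].
case: j i => j /= hj [i /= hi].
case: (drop i (take j K) =P J) => // h1.
case: (K' =P take i K ++ I ++ drop j K) => // h2 _.
by exists i, j; split.
Qed.

Lemma NL_pos {n} (I J K K' : seq 'I_n) : NL I J K K' != 0%N ->
  exists i, [/\ (i <= size K)%N, take i K = J & K' = I ++ drop i K].
Proof.
rewrite /NL sum_nat_eq0 => /forallPn [[i /= hi]].
case: (take i K =P J) => // h1.
case: (K' =P I ++ drop i K) => // h2 _.
by exists i; split.
Qed.

Lemma NR_pos {n} (I J K K' : seq 'I_n) : NR I J K K' != 0%N ->
  exists i, [/\ (i <= size K)%N, drop i K = J & K' = take i K ++ I].
Proof.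
rewrite /NR sum_nat_eq0 => /forallPn [[i /= hi]].
case: (drop i K =P J) => // h1.
case: (K' =P take i K ++ I) => // h2 _.
by exists i; split.
Qed.

Definition Jg {n m} (g : gen n m) : seq 'I_n :=
  match g with GF _ _ _ J _ _ => J | GL _ _ _ J => J | GR _ J _ _ => J | GS _ J => J end.
Definition Ig {n m} (g : gen n m) : seq 'I_n :=
  match g with GF _ _ X _ _ _ => X | GL _ _ X _ => X | GR X _ _ _ => X | GS X _ => X end.

Lemma size_lemma {n m} (g : gen n m) a K c a' K' c' :
  op_of g (a, K, c) (a', K', c') != 0 ->
  (size (Jg g) <= size K)%N /\
  (size (Jg g) = size K -> Jg g = K /\ Ig g = K').
Proof.
case: g => [l1 l2 I J l3 l4|l1 l2 I J|I J l1 l2|I J] /= h.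
- have := b2C_neq0 h.
  by case/and5P => _ /eqP -> _ _ /andP [/eqP -> _].
- case: (b2Cnat_neq0 h) => _ /NL_pos [i [hi <- ->]].
  rewrite size_takel //; split => // e.
  by rewrite e take_size drop_size cats0.
- case: (b2Cnat_neq0 h) => _ /NR_pos [i [hi <- ->]].
  rewrite size_drop; split; first exact: leq_subr.
  move=> e; have i0 : i = 0%N.
    by apply/eqP; move: e hi; clear; lia.
  by rewrite i0 drop0 take0.
- case: (b2Cnat_neq0 h) => _ /NS_pos [i [j [hij hj <- ->]]].
  rewrite size_drop size_takel //; split; first by apply: leq_trans (leq_subr _ _) hj.
  move=> e; have [i0 j0] : i = 0%N /\ j = size K.
    by move: e hij hj; clear; lia.
  by rewrite i0 j0 take_size drop_size take0 drop0 cats0.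
Qed.

Definition kr {n m} (g : gen n m) : nat :=
  match g with GF _ _ _ _ _ _ => 2 | GL _ _ _ _ => 1 | GR _ _ _ _ => 1 | GS _ _ => 0 end.
Definition rk {n m} (g : gen n m) : nat := (3 * size (Jg g) + kr g)%N.

Definition te {n m} (z : 'I_m) (g : gen n m) : basisT n m * basisT n m :=
  match g with
  | GF l1 l2 X J l3 l4 => ((l2, J, l4), (l1, X, l3))
  | GL l1 l2 X J => ((l2, J, z), (l1, X, z))
  | GR X J l1 l2 => ((z, J, l2), (z, X, l1))
  | GS X J => ((z, J, z), (z, X, z))
  end.

Lemma inB0_F {n m} (l1 l2 : 'I_m) (X J : seq 'I_n) l3 l4 :
  inB0 (GF l1 l2 X J l3 l4) =
  ((val l1 != 0%N) || (val l2 != 0%N)) && ((val l3 != 0%N) || (val l4 != 0%N)).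
Proof. by rewrite /= !addSn !addnS !ltnS lt0n addn_eq0 negb_and lt0n addn_eq0 negb_and. Qed.

Lemma inB0_L {n m} (l1 l2 : 'I_m) (X J : seq 'I_n) :
  inB0 (GL l1 l2 X J) = (val l1 != 0%N) || (val l2 != 0%N).
Proof. by []. Qed.

Lemma inB0_R {n m} (l1 l2 : 'I_m) (X J : seq 'I_n) :
  inB0 (GR X J l1 l2) = (val l1 != 0%N) || (val l2 != 0%N).
Proof. by []. Qed.

Lemma key {n m} {z : 'I_m} {g g' : gen n m} : val z = 0%N ->
  inB0 g -> inB0 g' ->
  op_of g' (te z g).1 (te z g).2 != 0 ->
  g' = g \/ (rk g' < rk g)%N.
Proof.
move=> z0 hg hg' h.
have [hle heq] : (size (Jg g') <= size (Jg g))%N /\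
    (size (Jg g') = size (Jg g) -> Jg g' = Jg g /\ Ig g' = Ig g).
  by case: g hg h => [l1 l2 X J l3 l4|l1 l2 X J|X J l1 l2|X J] _ /= /size_lemma.
case: (ltnP (rk g') (rk g)) => hr; [by right | left].
have hs : size (Jg g') = size (Jg g).
  move: hr hle; rewrite /rk.
  have : (kr g <= 2)%N by case: g {h hg heq}.
  have : (kr g' <= 2)%N by case: g' {h hg' heq}.
  move=> ? ?; lia.
case: (heq hs) => hJ hI.
have hk : (kr g <= kr g')%N by move: hr; rewrite /rk hs; lia.
case: g hg h hJ hI hk {hle heq hs hr} => [l1 l2 X J l3 l4|l1 l2 X J|X J l1 l2|X J] hg;
case: g' hg' => [l1' l2' X' J' l3' l4'|l1' l2' X' J'|X' J' l1' l2'|X' J'] hg' /= h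
  -> -> // _.
all: first [ move/b2C_neq0: h => /and5P [/eqP e1 _ /eqP e2 /eqP e3 /andP [_ /eqP e4]]
           | case/b2Cnat_neq0: h => /and3P [/eqP e1 /eqP e2 _] _ ].
all: subst => //.
all: move: hg'; rewrite ?inB0_F ?inB0_L ?inB0_R ?z0 ?eqxx ?andbF ?andFb ?orbF //.
Qed.

Lemma self_neq0 {n m} (z : 'I_m) (g : gen n m) :
  op_of g (te z g).1 (te z g).2 != 0.
Proof.
case: g => [l1 l2 X J l3 l4|l1 l2 X J|X J l1 l2|X J] /=.
- by rewrite !eqxx b2C_true oner_neq0.
- rewrite !eqxx /= b2C_true mul1r pnatr_eq0 -lt0n.
  rewrite (bigD1 ord_max) //= take_size drop_size cats0 !eqxx.
  by [].
- rewrite !eqxx /= b2C_true mul1r pnatr_eq0 -lt0n.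
  by rewrite (bigD1 ord0) //= take0 drop0 !eqxx.
- rewrite !eqxx /= b2C_true mul1r pnatr_eq0 -lt0n.
  rewrite (bigD1 ord_max) //= (bigD1 ord0) //= take_size drop_size take0 drop0 cats0 !eqxx.
  by [].
Qed.

Lemma indep {n m} (z : 'I_m) (z0 : val z = 0%N) k (f : 'I_k -> gen n m)
  (c : 'I_k -> C) :
  injective f -> (forall i, inB0 (f i)) ->
  (forall b b', lincomb c f b b' = 0) -> forall i, c i = 0.
Proof.
move=> hinj hB hl.
suff H : forall r i, (rk (f i) < r)%N -> c i = 0 by move=> i; apply: (H (rk (f i)).+1).
elim=> [//|r IH] i hi.
have := hl (te z (f i)).1 (te z (f i)).2; rewrite /lincomb (bigD1 i) //= big1 ?addr0.
  by move/eqP; rewrite mulf_eq0 (negbTE (self_neq0 z (f i))) orbF => /eqP.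
move=> j hji.
case: (eqVneq (op_of (f j) (te z (f i)).1 (te z (f i)).2) 0) => [->|hne].
  by rewrite mulr0.
case: (key z0 (hB i) (hB j) hne) => [/hinj e|hlt].
  by rewrite e eqxx in hji.
by rewrite IH ?mul0r //; apply: leq_trans hlt hi.
Qed.

Lemma sum_pickC {k} (c : 'I_k) (F : 'I_k -> C) :
  (forall l, l != c -> F l = 0) -> \sum_(l < k) F l = F c.
Proof. by move=> h; rewrite (bigD1 c) //= big1 ?addr0. Qed.

Lemma opA {n m} (X J : seq 'I_n) (b b' : basisT n m) :
  opS X J b b' = \sum_(l < m) opL l l X J b b' + \sum_(x < n) opS (x :: X) (x :: J) b b'.
Proof.
case: b => [[a K] c]; case: b' => [[a' K'] c'] /=.
rewrite -/(NS X J K K') -/(NL X J K K').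
rewrite (sum_pickC a); last first.
  by move=> l hl; rewrite eq_sym (negbTE hl) b2C_false mul0r.
under eq_bigr => x _ do rewrite -/(NS (x :: X) (x :: J) K K').
rewrite NS_A natrD mulrDr eqxx /=; congr (_ + _).
by rewrite natr_sum mulr_sumr.
Qed.

Lemma opB {n m} (X J : seq 'I_n) (b b' : basisT n m) :
  opS X J b b' = \sum_(l < m) opR X J l l b b' +
                 \sum_(x < n) opS (rcons X x) (rcons J x) b b'.
Proof.
case: b => [[a K] c]; case: b' => [[a' K'] c'] /=.
rewrite -/(NS X J K K') -/(NR X J K K').
rewrite (sum_pickC c); last first.
  by move=> l hl; rewrite eq_sym (negbTE hl) b2C_false mul0r.
under eq_bigr => x _ do rewrite -/(NS (rcons X x) (rcons J x) K K').
rewrite NS_B natrD mulrDr eqxx /= [(c' == c) && _]andbC; congr (_ + _).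
by rewrite natr_sum mulr_sumr.
Qed.

Lemma opC {n m} (l1 l2 : 'I_m) (X J : seq 'I_n) (b b' : basisT n m) :
  opL l1 l2 X J b b' = \sum_(l < m) opF l1 l2 X J l l b b' +
                 \sum_(x < n) opL l1 l2 (rcons X x) (rcons J x) b b'.
Proof.
case: b => [[a K] c]; case: b' => [[a' K'] c'] /=.
rewrite -/(NL X J K K').
rewrite (sum_pickC c); last first.
  by move=> l hl; rewrite [c == l]eq_sym (negbTE hl) /= !andbF b2C_false.
under eq_bigr => x _ do rewrite -/(NL (rcons X x) (rcons J x) K K').
rewrite NL_C natrD mulrDr eqxx; congr (_ + _); last first.
  by rewrite natr_sum mulr_sumr.
rewrite /b2C.
by case: (a == l2); case: (a' == l1); case: (c' == c); case: (K == J); case: (K' == X);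
  rewrite /= ?mulr1n ?mulr0n ?mul1r ?mul0r.
Qed.

Lemma opD {n m} (l1 l2 : 'I_m) (X J : seq 'I_n) (b b' : basisT n m) :
  opR X J l1 l2 b b' = \sum_(l < m) opF l l X J l1 l2 b b' +
                 \sum_(x < n) opR (x :: X) (x :: J) l1 l2 b b'.
Proof.
case: b => [[a K] c]; case: b' => [[a' K'] c'] /=.
rewrite -/(NR X J K K').
rewrite (sum_pickC a); last first.
  by move=> l hl; rewrite [a == l]eq_sym (negbTE hl) /= b2C_false.
under eq_bigr => x _ do rewrite -/(NR (x :: X) (x :: J) K K').
rewrite NR_D natrD mulrDr eqxx; congr (_ + _); last first.
  by rewrite natr_sum mulr_sumr.
rewrite /b2C.
by case: (c == l2); case: (a' == a); case: (c' == l1); case: (K == J); case: (K' == X);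
  rewrite /= ?mulr1n ?mulr0n ?mul1r ?mul0r.
Qed.

Definition lcs {n m} (s : seq (C * gen n m)) : opT n m :=
  fun b b' => \sum_(p <- s) p.1 * op_of p.2 b b'.
Definition Rep {n m} (T : opT n m) :=
  exists s : seq (C * gen n m), all (fun p => inB0 p.2) s /\
    forall b b', T b b' = lcs s b b'.

Lemma Rep_ext {n m} {T T' : opT n m} :
  Rep T -> (forall b b', T b b' = T' b b') -> Rep T'.
Proof. by move=> [s [h1 h2]] e; exists s; split=> // b b'; rewrite -e. Qed.

Lemma Rep_op {n m} (g : gen n m) : inB0 g -> Rep (op_of g).
Proof.
by move=> h; exists [:: (1, g)]; split; rewrite /= ?h // => b b'; rewrite /lcs big_seq1 mul1r.
Qed.

Lemma Rep0 {n m} : @Rep n m (fun _ _ => 0).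
Proof. by exists [::]; split => // b b'; rewrite /lcs big_nil. Qed.

Lemma Rep_add {n m} {T1 T2 : opT n m} :
  Rep T1 -> Rep T2 -> Rep (fun b b' => T1 b b' + T2 b b').
Proof.
move=> [s1 [a1 h1]] [s2 [a2 h2]]; exists (s1 ++ s2); split.
  by rewrite all_cat a1 a2.
by move=> b b'; rewrite /lcs big_cat /= h1 h2.
Qed.

Lemma Rep_scale {n m} (a : C) {T : opT n m} :
  Rep T -> Rep (fun b b' => a * T b b').
Proof.
move=> [s [a1 h1]]; exists (map (fun p => (a * p.1, p.2)) s); split.
  by rewrite all_map.
by move=> b b'; rewrite /lcs big_map h1 /lcs mulr_sumr; apply: eq_bigr => p _; rewrite mulrA.
Qed.

Lemma Rep_sum {n m} {I : Type} (r : seq I) (P : pred I) (T : I -> opT n m) :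
  (forall x, P x -> Rep (T x)) -> Rep (fun b b' => \sum_(x <- r | P x) T x b b').
Proof.
move=> h; elim: r => [|x r IH].
  by apply: (Rep_ext Rep0) => b b'; rewrite big_nil.
case hx: (P x).
  by apply: (Rep_ext (Rep_add (h x hx) IH)) => b b'; rewrite big_cons hx.
by apply: (Rep_ext IH) => b b'; rewrite big_cons hx.
Qed.

Lemma Rep_sumT {n m} {I : Type} (r : seq I) (T : I -> opT n m) :
  (forall x, Rep (T x)) -> Rep (fun b b' => \sum_(x <- r) T x b b').
Proof. by move=> h; apply: (@Rep_sum n m I r xpredT) => x _. Qed.

Lemma Rep_sub {n m} {T T1 T2 T3 : opT n m} :
  (forall b b', T1 b b' = T b b' + T2 b b' + T3 b b') ->
  Rep T1 -> Rep T2 -> Rep T3 -> Rep T.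
Proof.
move=> e h1 h2 h3.
apply: (Rep_ext (Rep_add h1 (Rep_scale (-1) (Rep_add h2 h3)))) => b b'.
by rewrite e; ring.
Qed.

Lemma nz_of_neq {m} {z : 'I_m} (z0 : val z = 0%N) {l : 'I_m} : l != z -> val l != 0%N.
Proof. by apply: contra => /eqP h; apply/eqP/val_inj; rewrite /= h z0. Qed.

Lemma eq_z_of {m} {z : 'I_m} (z0 : val z = 0%N) (l : 'I_m) : val l = 0%N -> l = z.
Proof. by move=> h; apply/val_inj; rewrite /= h z0. Qed.

Section Span.
Lemma RepL {n m} {z : 'I_m} (z0 : val z = 0%N) (l1 l2 : 'I_m) (X J : seq 'I_n) :
  Rep (opL l1 l2 X J).
Proof.
case h: ((val l1 != 0%N) || (val l2 != 0%N)).
  by apply: (Rep_op (GL l1 l2 X J)); rewrite inB0_L.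
move/negbT: h; rewrite negb_or !negbK => /andP [/eqP /(eq_z_of z0) -> /eqP /(eq_z_of z0) ->].
apply: (Rep_sub (T1 := opS X J)
   (T2 := fun b b' => \sum_(l < m | l != z) opL l l X J b b')
   (T3 := fun b b' => \sum_(x < n) opS (x :: X) (x :: J) b b')).
- by move=> b b'; rewrite opA (bigD1 z) //= addrA.
- by apply: (Rep_op (@GS n m X J)).
- apply: Rep_sum => l hl; apply: (Rep_op (GL l l X J)).
  by rewrite inB0_L (nz_of_neq z0 hl).
- by apply: Rep_sumT => x; apply: (Rep_op (@GS _ _ _ _)).
Qed.

Lemma RepR {n m} {z : 'I_m} (z0 : val z = 0%N) (l1 l2 : 'I_m) (X J : seq 'I_n) :
  Rep (opR X J l1 l2).
Proof.
case h: ((val l1 != 0%N) || (val l2 != 0%N)).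
  by apply: (Rep_op (GR X J l1 l2)); rewrite inB0_R.
move/negbT: h; rewrite negb_or !negbK => /andP [/eqP /(eq_z_of z0) -> /eqP /(eq_z_of z0) ->].
apply: (Rep_sub (T1 := opS X J)
   (T2 := fun b b' => \sum_(l < m | l != z) opR X J l l b b')
   (T3 := fun b b' => \sum_(x < n) opS (rcons X x) (rcons J x) b b')).
- by move=> b b'; rewrite opB (bigD1 z) //= addrA.
- by apply: (Rep_op (@GS n m X J)).
- apply: Rep_sum => l hl; apply: (Rep_op (GR X J l l)).
  by rewrite inB0_R (nz_of_neq z0 hl).
- by apply: Rep_sumT => x; apply: (Rep_op (@GS _ _ _ _)).
Qed.

Lemma RepF_nzL {n m} {z : 'I_m} (z0 : val z = 0%N) (l1 l2 : 'I_m) (X J : seq 'I_n) l3 l4 :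
  (val l1 != 0%N) || (val l2 != 0%N) -> Rep (opF l1 l2 X J l3 l4).
Proof.
move=> h12.
case h: ((val l3 != 0%N) || (val l4 != 0%N)).
  by apply: (Rep_op (GF l1 l2 X J l3 l4)); rewrite inB0_F h12 h.
move/negbT: h; rewrite negb_or !negbK => /andP [/eqP /(eq_z_of z0) -> /eqP /(eq_z_of z0) ->].
apply: (Rep_sub (T1 := opL l1 l2 X J)
   (T2 := fun b b' => \sum_(l < m | l != z) opF l1 l2 X J l l b b')
   (T3 := fun b b' => \sum_(x < n) opL l1 l2 (rcons X x) (rcons J x) b b')).
- by move=> b b'; rewrite opC (bigD1 z) //= addrA.
- by apply: (Rep_op (GL l1 l2 X J)).
- apply: Rep_sum => l hl; apply: (Rep_op (GF l1 l2 X J l l)).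
  by rewrite inB0_F h12 (nz_of_neq z0 hl).
- by apply: Rep_sumT => x; apply: (Rep_op (GL _ _ _ _)).
Qed.

Lemma RepF_nzR {n m} {z : 'I_m} (z0 : val z = 0%N) (l1 l2 : 'I_m) (X J : seq 'I_n) l3 l4 :
  (val l3 != 0%N) || (val l4 != 0%N) -> Rep (opF l1 l2 X J l3 l4).
Proof.
move=> h34.
case h: ((val l1 != 0%N) || (val l2 != 0%N)).
  by apply: (Rep_op (GF l1 l2 X J l3 l4)); rewrite inB0_F h34 h.
move/negbT: h; rewrite negb_or !negbK => /andP [/eqP /(eq_z_of z0) -> /eqP /(eq_z_of z0) ->].
apply: (Rep_sub (T1 := opR X J l3 l4)
   (T2 := fun b b' => \sum_(l < m | l != z) opF l l X J l3 l4 b b')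
   (T3 := fun b b' => \sum_(x < n) opR (x :: X) (x :: J) l3 l4 b b')).
- by move=> b b'; rewrite opD (bigD1 z) //= addrA.
- by apply: (Rep_op (GR X J l3 l4)).
- apply: Rep_sum => l hl; apply: (Rep_op (GF l l X J l3 l4)).
  by rewrite inB0_F h34 (nz_of_neq z0 hl).
- by apply: Rep_sumT => x; apply: (Rep_op (GR _ _ _ _)).
Qed.

Lemma RepF {n m} {z : 'I_m} (z0 : val z = 0%N) (l1 l2 : 'I_m) (X J : seq 'I_n) l3 l4 :
  Rep (opF l1 l2 X J l3 l4).
Proof.
case h12: ((val l1 != 0%N) || (val l2 != 0%N)); first by apply: (RepF_nzL z0).
case h34: ((val l3 != 0%N) || (val l4 != 0%N)); first by apply: (RepF_nzR z0).
move/negbT: h12; rewrite negb_or !negbK => /andP [/eqP /(eq_z_of z0) -> /eqP /(eq_z_of z0) ->].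
move/negbT: h34; rewrite negb_or !negbK => /andP [/eqP /(eq_z_of z0) -> /eqP /(eq_z_of z0) ->].
apply: (Rep_sub (T1 := opL z z X J)
   (T2 := fun b b' => \sum_(l < m | l != z) opF z z X J l l b b')
   (T3 := fun b b' => \sum_(x < n) opL z z (rcons X x) (rcons J x) b b')).
- by move=> b b'; rewrite opC (bigD1 z) //= addrA.
- exact: (RepL z0).
- apply: Rep_sum => l hl; apply: (RepF_nzR z0).
  by rewrite (nz_of_neq z0 hl).
- by apply: Rep_sumT => x; apply: (RepL z0).
Qed.

Lemma Rep_all {n m} {z : 'I_m} (z0 : val z = 0%N) (g : gen n m) : Rep (op_of g).
Proof.
case: g => [l1 l2 X J l3 l4|l1 l2 X J|X J l1 l2|X J] /=.
- exact: (RepF z0).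
- exact: (RepL z0).
- exact: (RepR z0).
- by apply: (Rep_op (@GS n m X J)).
Qed.

Lemma Rep_lincomb {n m} (T : opT n m) : Rep T ->
  exists (k : nat) (f : 'I_k -> gen n m) (c : 'I_k -> C),
       (forall i, inB0 (f i)) /\ (forall b b', T b b' = lincomb c f b b').
Proof.
move=> [s [hall he]].
pose p0 : C * gen n m := (0, @GS n m [::] [::]).
exists (size s), (fun i => (nth p0 s i).2), (fun i => (nth p0 s i).1); split.
  by move=> i; move/(all_nthP p0): hall => H; apply: H.
by move=> b b'; rewrite he /lcs /lincomb (big_nth p0) big_mkord.
Qed.
End Span.

Theorem proposition1 (Lambda LambdaF : nat) :
  (0 < Lambda)%N -> (0 < LambdaF)%N ->
  (* linear independence of the family B_0 (indexed without repetition) *)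
  (forall (k : nat) (f : 'I_k -> gen Lambda LambdaF) (c : 'I_k -> C),
     injective f -> (forall i, inB0 (f i)) ->
     (forall b b', lincomb c f b b' = 0) ->
     forall i, c i = 0) /\
  (* B_0 spans the span of all operators of the four kinds *)
  (forall g : gen Lambda LambdaF,
     exists (k : nat) (f : 'I_k -> gen Lambda LambdaF) (c : 'I_k -> C),
       (forall i, inB0 (f i)) /\
       (forall b b', op_of g b b' = lincomb c f b b')).
Proof.
move=> hn hm.
pose z : 'I_LambdaF := Ordinal hm.
have z0 : val z = 0%N by [].
split.
- move=> k f c hinj hB hl; exact: (indep z z0 k f c hinj hB hl).
- by move=> g; exact: (Rep_lincomb _ (Rep_all z0 g)).
Qed.
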